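(* Let $0<\gamma<1$, $p\ge2$ an integer, and $$\beta_{\gamma,p}:=\min\left\{\frac{1-\gamma}{2p}\log\Bigl(\frac{2p}{p+1}\Bigr),\ \frac{1-\gamma}{8\,p^\gamma(p-1)^{1-\gamma}}\right\}.$$ Then for every $j\ge p$, $$(c_\gamma^{(p)})_j\le (c_\gamma)_p\,(1-\beta_{\gamma,p})^{j-p},$$ and moreover $\frac{1-\gamma}{8p}\le\beta_{\gamma,p}\le\frac{1-\gamma}{4p}$.
   Context: $\log$ is the natural logarithm. $(c_\gamma)_j$ is defined by $(1-x)^{-\gamma}=\sum_{j\ge0}(c_\gamma)_jx^j$; $(\tilde c_\gamma)_k$ by $(1-x)^{\gamma}=\sum_{k\ge0}(\tilde c_\gamma)_kx^k$ ($|x|<1$). The sequence $(c_\gamma^{(p)})_j$ is defined by $(c_\gamma^{(p)})_0=1$ and $(c_\gamma^{(p)})_j=-\sum_{k=1}^{\min\{p-1,j\}}(\tilde c_\gamma)_k(c_\gamma^{(p)})_{j-k}$ for $j\ge1$; its first $n$ terms are the subdiagonal entries of the lower-triangular Toeplitz matrix $C_\gamma^{(p)}$, the inverse of the $n\times n$ lower-triangular Toeplitz matrix with $r$-th subdiagonal $(\tilde c_\gamma)_r$ for $r\le p-1$ and $0$ otherwise. *)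

(* Defs.v *)
From Stdlib Require Import Reals List Lra Lia.
Import ListNotations.
Open Scope R_scope.

Fixpoint gbinom (a : R) (k : nat) : R :=
  match k with
  | O => 1
  | S k' => gbinom a k' * (a - INR k') / INR (S k')
  end.

(* (1-x)^{-g} = sum_j (c_g)_j x^j  (binomial series): (c_g)_j = (-1)^j binom(-g, j) *)
Definition c_gam (g : R) (j : nat) : R := (-1) ^ j * gbinom (- g) j.

(* (1-x)^{g} = sum_k (ct_g)_k x^k : (ct_g)_k = (-1)^k binom(g, k) *)
Definition ct_gam (g : R) (k : nat) : R := (-1) ^ k * gbinom g k.

Fixpoint cp_list (g : R) (p : nat) (n : nat) : list R :=
  match n with
  | O => [1]
  | S n' =>
      let l := cp_list g p n' in
      l ++ [ - fold_right Rplus 0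
               (map (fun k => ct_gam g k * nth (S n' - k) l 0)
                    (seq 1 (Nat.min (p - 1) (S n')))) ]
  end.

Definition cp_gam (g : R) (p : nat) (j : nat) : R := nth j (cp_list g p j) 0.

Definition beta_gp (g : R) (p : nat) : R :=
  Rmin ((1 - g) / (2 * INR p) * ln (2 * INR p / (INR p + 1)))
       ((1 - g) / (8 * Rpower (INR p) g * Rpower (INR p - 1) (1 - g))).

(* Main.v *)
Require Import Defs.
From Stdlib Require Import Reals Lra Lia List Wf_nat Compare_dec.
Import ListNotations.
Open Scope R_scope.

Lemma cp_len g p n : length (cp_list g p n) = S n.
Proof. induction n; simpl; auto. rewrite length_app, IHn; simpl; lia. Qed.

Lemma cp_stab g p n i : (i <= n)%nat -> nth i (cp_list g p n) 0 = cp_gam g p i.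
Proof.
  induction n; intros H.
  - assert (i = 0%nat) by lia; subst; reflexivity.
  - destruct (Nat.eq_dec i (S n)) as [->|Hne]; [reflexivity|].
    simpl cp_list. rewrite app_nth1 by (rewrite cp_len; lia). apply IHn; lia.
Qed.

Lemma fold_sum (f : nat -> R) s m :
  fold_right Rplus 0 (map f (seq s (S m))) = sum_f_R0 (fun i => f (s + i)%nat) m.
Proof.
  revert s; induction m; intros s.
  - simpl. rewrite Nat.add_0_r; ring.
  - change (seq s (S (S m))) with (s :: seq (S s) (S m)).
    rewrite map_cons. cbn [fold_right]. rewrite IHm.
    rewrite (decomp_sum (fun i => f (s + i)%nat) (S m)) by lia. simpl pred.
    rewrite Nat.add_0_r. f_equal. apply sum_eq; intros; f_equal; lia.
Qed.

Lemma D_rec g p j : (1 <= j)%nat -> (2 <= p)%nat ->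
  cp_gam g p j = - sum_f_R0 (fun i => ct_gam g (S i) * cp_gam g p (j - S i)) (Nat.min (p-1) j - 1).
Proof.
  intros Hj Hp. destruct j as [|n]; [lia|].
  unfold cp_gam at 1. simpl cp_list.
  rewrite <- (cp_len g p n) at 1. rewrite nth_middle.
  replace (Nat.min (p-1) (S n)) with (S (Nat.min (p-1) (S n) - 1)) at 1 by lia.
  rewrite fold_sum. f_equal. apply sum_eq; intros i Hi.
  replace (1 + i)%nat with (S i) by lia. rewrite cp_stab by lia. reflexivity.
Qed.

Lemma ct_S g k : ct_gam g (S k) = ct_gam g k * ((INR k - g) / INR (S k)).
Proof.
  unfold ct_gam. cbn [gbinom pow]. field. apply not_0_INR; lia.
Qed.

Lemma c_S g k : c_gam g (S k) = c_gam g k * ((INR k + g) / INR (S k)).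
Proof.
  unfold c_gam. cbn [gbinom pow]. field. apply not_0_INR; lia.
Qed.

Lemma ct_neg g k : 0 < g < 1 -> (1 <= k)%nat -> ct_gam g k < 0.
Proof.
  intros Hg Hk. induction k as [|k IH]; [lia|].
  rewrite ct_S. destruct (Nat.eq_dec k 0) as [->|Hne].
  - unfold ct_gam; simpl. lra.
  - assert (H1 : 1 <= INR k) by (apply (le_INR 1); lia).
    assert (H2 : 0 < (INR k - g) / INR (S k)).
    { apply Rdiv_lt_0_compat; [lra| apply lt_0_INR; lia]. }
    specialize (IH ltac:(lia)). nra.
Qed.

Lemma c_pos g k : 0 < g < 1 -> 0 < c_gam g k.
Proof.
  intros Hg. induction k as [|k IH].
  - unfold c_gam; simpl; lra.
  - rewrite c_S. assert (0 < (INR k + g) / INR (S k)).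
    { apply Rdiv_lt_0_compat; [pose proof (pos_INR k); lra| apply lt_0_INR; lia]. }
    nra.
Qed.

Definition u g n := sum_f_R0 (fun k => ct_gam g k * c_gam g (n - k)) n.

Lemma u_step g n : INR (S n) * u g (S n) = INR n * u g n.
Proof.
  unfold u.
  assert (E1 : INR (S n) * sum_f_R0 (fun k => ct_gam g k * c_gam g (S n - k)) (S n)
     = sum_f_R0 (fun k => INR k * ct_gam g k * c_gam g (S n - k)) (S n)
     + sum_f_R0 (fun k => INR (S n - k) * ct_gam g k * c_gam g (S n - k)) (S n)).
  { rewrite <- plus_sum, scal_sum. apply sum_eq; intros i Hi.
    rewrite minus_INR by lia. ring. }
  assert (E2 : sum_f_R0 (fun k => INR k * ct_gam g k * c_gam g (S n - k)) (S n)
     = sum_f_R0 (fun k => (INR k - g) * ct_gam g k * c_gam g (n - k)) n).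
  { rewrite decomp_sum by lia. simpl pred. simpl (INR 0). rewrite Rmult_0_l, Rmult_0_l, Rplus_0_l.
    apply sum_eq; intros i Hi. rewrite ct_S. simpl (S n - S i)%nat.
    field. apply not_0_INR; lia. }
  assert (E3 : sum_f_R0 (fun k => INR (S n - k) * ct_gam g k * c_gam g (S n - k)) (S n)
     = sum_f_R0 (fun k => (INR n - INR k + g) * ct_gam g k * c_gam g (n - k)) n).
  { rewrite tech5. rewrite Nat.sub_diag. simpl (INR 0). rewrite Rmult_0_l, Rmult_0_l, Rplus_0_r.
    apply sum_eq; intros i Hi. replace (S n - i)%nat with (S (n - i)) by lia.
    rewrite c_S. rewrite minus_INR by lia. field. apply not_0_INR; lia. }
  rewrite E1, E2, E3, <- plus_sum, scal_sum. apply sum_eq; intros; ring.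
Qed.

Lemma u_zero g n : u g (S n) = 0.
Proof.
  induction n.
  - pose proof (u_step g 0). simpl (INR 0) in H. simpl (INR 1) in H. lra.
  - pose proof (u_step g (S n)). rewrite IHn, Rmult_0_r in H.
    assert (INR (S (S n)) <> 0) by (apply not_0_INR; lia).
    apply Rmult_integral in H. destruct H; [contradiction|assumption].
Qed.

Lemma c_conv g n : c_gam g (S n) = - sum_f_R0 (fun i => ct_gam g (S i) * c_gam g (S n - S i)) n.
Proof.
  pose proof (u_zero g n). unfold u in H.
  rewrite decomp_sum in H by lia. simpl pred in H.
  replace (ct_gam g 0) with 1 in H by (unfold ct_gam; simpl; ring).
  rewrite Nat.sub_0_r in H. lra.
Qed.

Lemma Rpower_pos' a b : 0 < Rpower a b.
Proof. unfold Rpower; apply exp_pos. Qed.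

Lemma beta_bounds g p : 0 < g < 1 -> (2 <= p)%nat ->
  (1 - g) / (8 * INR p) <= beta_gp g p <= (1 - g) / (4 * INR p).
Proof.
  intros Hg Hp. assert (HP : 2 <= INR p) by (apply (le_INR 2); lia).
  set (P := INR p) in *.
  set (X := Rpower P g * Rpower (P - 1) (1 - g)).
  assert (HX1 : P / 2 <= X).
  { apply Rle_trans with (Rpower (P/2) g * Rpower (P/2) (1 - g)).
    - rewrite <- Rpower_plus. replace (g + (1 - g)) with 1 by ring. rewrite Rpower_1; lra.
    - apply Rmult_le_compat.
      + left; apply Rpower_pos'.
      + left; apply Rpower_pos'.
      + apply Rle_Rpower_l; lra.
      + apply Rle_Rpower_l; lra. }
  assert (HX2 : X <= P).
  { apply Rle_trans with (Rpower P g * Rpower P (1 - g)).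
    - apply Rmult_le_compat_l. left; apply Rpower_pos'. apply Rle_Rpower_l; lra.
    - rewrite <- Rpower_plus. replace (g + (1 - g)) with 1 by ring. rewrite Rpower_1; lra. }
  assert (Hl : 1/4 <= ln (2 * P / (P + 1))).
  { assert (E : exp (1/4) < 4/3).
    { pose proof (exp_ineq1 (-(1/4)) ltac:(lra)).
      pose proof (exp_plus (1/4) (-(1/4))). replace (1/4 + - (1/4)) with 0 in H0 by ring.
      rewrite exp_0 in H0. pose proof (exp_pos (1/4)). nra. }
    rewrite <- (ln_exp (1/4)). left. apply ln_increasing. apply exp_pos.
    apply Rlt_le_trans with (4/3); [lra|].
    apply Rmult_le_reg_r with (P + 1); [lra|].
    replace (2*P/(P+1)*(P+1)) with (2*P) by (field; lra). lra. }
  assert (HX0 : 0 < X) by lra.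
  unfold beta_gp. fold P.
  replace (8 * Rpower P g * Rpower (P - 1) (1 - g)) with (8 * X) by (unfold X; ring). split.
  - apply Rmin_glb.
    + replace ((1 - g) / (8 * P)) with ((1 - g) / (2 * P) * (1/4)) by (field; lra).
      apply Rmult_le_compat_l; [|exact Hl].
      left; apply Rdiv_lt_0_compat; lra.
    + unfold Rdiv. apply Rmult_le_compat_l; [lra|].
      apply Rinv_le_contravar; lra.
  - apply Rle_trans with ((1 - g) / (8 * X)); [apply Rmin_r|].
    unfold Rdiv. apply Rmult_le_compat_l; [lra|].
    apply Rinv_le_contravar; lra.
Qed.

Lemma D_eq_c g p j : (2 <= p)%nat -> (j <= p - 1)%nat -> cp_gam g p j = c_gam g j.
Proof.
  intros Hp. revert j. induction j as [j IH] using lt_wf_ind. intros Hj.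
  destruct j as [|m].
  - unfold cp_gam, c_gam; simpl; ring.
  - rewrite D_rec by lia. replace (Nat.min (p - 1) (S m) - 1)%nat with m by lia.
    rewrite c_conv. f_equal. apply sum_eq; intros i Hi. rewrite IH by lia. reflexivity.
Qed.

Lemma D_p g p : (2 <= p)%nat -> cp_gam g p p = c_gam g p + ct_gam g p.
Proof.
  intros Hp. destruct p as [|n]; [lia|].
  rewrite D_rec by lia. replace (Nat.min (S n - 1) (S n) - 1)%nat with (n - 1)%nat by lia.
  rewrite c_conv.
  pose proof (tech5 (fun i => ct_gam g (S i) * c_gam g (S n - S i)) (n - 1)) as T.
  replace (S (n - 1)) with n in T by lia. rewrite T. cbv beta. rewrite Nat.sub_diag.
  replace (c_gam g 0) with 1 by (unfold c_gam; simpl; ring).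
  assert (sum_f_R0 (fun i => ct_gam g (S i) * cp_gam g (S n) (S n - S i)) (n - 1)
        = sum_f_R0 (fun i => ct_gam g (S i) * c_gam g (S n - S i)) (n - 1)).
  { apply sum_eq; intros i Hi. rewrite D_eq_c by lia. reflexivity. }
  rewrite H. ring.
Qed.

Lemma step g p i : 0 < g < 1 -> (2 <= p)%nat ->
  cp_gam g p (S i) <= (1 - beta_gp g p) * cp_gam g p i.
Proof.
  intros Hg Hp. pose proof (beta_bounds g p Hg Hp) as [Hb1 Hb2].
  assert (HP : 2 <= INR p) by (apply (le_INR 2); lia).
  set (b := beta_gp g p) in *. set (r := 1 - b).
  assert (Hb0 : 0 < b).
  { eapply Rlt_le_trans; [|exact Hb1]. apply Rdiv_lt_0_compat; lra. }
  assert (Hbb : b * (4 * INR p) <= 1 - g).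
  { apply Rmult_le_reg_r with (/ (4 * INR p)).
    apply Rinv_0_lt_compat; lra.
    replace (b * (4 * INR p) * / (4 * INR p)) with b by (field; lra). exact Hb2. }
  assert (Hq : forall k, (S k <= p)%nat -> (INR k + g) / INR (S k) <= r).
  { intros k Hk. assert (HSk : INR (S k) <= INR p) by (apply le_INR; lia).
    assert (H0 : 0 < INR (S k)) by (apply lt_0_INR; lia).
    apply Rmult_le_reg_r with (INR (S k)); [exact H0|].
    replace ((INR k + g) / INR (S k) * INR (S k)) with (INR k + g) by (field; lra).
    rewrite S_INR in *. unfold r. nra. }
  revert i. induction i as [i IH] using lt_wf_ind.
  destruct (le_lt_dec (S i) (p - 1)) as [H1|H1].
  - rewrite !D_eq_c by lia. rewrite c_S. pose proof (c_pos g i Hg).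
    specialize (Hq i ltac:(lia)). fold r. nra.
  - destruct (Nat.eq_dec (S i) p) as [H2|H2].
    + rewrite H2, D_p by lia. rewrite D_eq_c by lia.
      pose proof (ct_neg g p Hg ltac:(lia)).
      replace p with (S i) at 1 by lia. rewrite c_S. pose proof (c_pos g i Hg).
      specialize (Hq i ltac:(lia)). fold r. nra.
    + rewrite (D_rec g p (S i)), (D_rec g p i) by lia.
      replace (Nat.min (p - 1) (S i) - 1)%nat with (p - 2)%nat by lia.
      replace (Nat.min (p - 1) i - 1)%nat with (p - 2)%nat by lia.
      fold r. rewrite <- Ropp_mult_distr_r, scal_sum. apply Ropp_le_contravar.
      apply sum_Rle; intros k Hk.
      replace (S i - S k)%nat with (S (i - S k)) by lia.
      pose proof (IH (i - S k)%nat ltac:(lia)). fold b r in H.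
      pose proof (ct_neg g (S k) Hg ltac:(lia)). nra.
Qed.

Lemma main1 g p : 0 < g < 1 -> (2 <= p)%nat -> forall j : nat, (p <= j)%nat ->
     cp_gam g p j <= c_gam g p * (1 - beta_gp g p) ^ (j - p).
Proof.
  intros Hg Hp j Hj. pose proof (beta_bounds g p Hg Hp) as [Hb1 Hb2].
  assert (HP : 2 <= INR p) by (apply (le_INR 2); lia).
  assert (Hr : 0 <= 1 - beta_gp g p).
  { assert ((1 - g) / (4 * INR p) <= 1).
    { apply Rmult_le_reg_r with (4 * INR p); [lra|].
      replace ((1 - g) / (4 * INR p) * (4 * INR p)) with (1 - g) by (field; lra). lra. }
    lra. }
  replace j with (p + (j - p))%nat at 1 by lia.
  induction (j - p)%nat as [|d IHd].
  - rewrite Nat.add_0_r, D_p by lia. pose proof (ct_neg g p Hg ltac:(lia)). simpl; lra.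
  - replace (p + S d)%nat with (S (p + d)) by lia.
    eapply Rle_trans; [apply step; assumption|]. simpl.
    apply Rmult_le_compat_l with (r := 1 - beta_gp g p) in IHd; [|exact Hr]. lra.
Qed.

Theorem mainTheorem6 (g : R) (p : nat) :
  0 < g < 1 -> (2 <= p)%nat ->
  (forall j : nat, (p <= j)%nat ->
     cp_gam g p j <= c_gam g p * (1 - beta_gp g p) ^ (j - p)) /\
  (1 - g) / (8 * INR p) <= beta_gp g p <= (1 - g) / (4 * INR p).
Proof.
  intros Hg Hp. split.
  - apply main1; assumption.
  - apply beta_bounds; assumption.
Qed.
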